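(* Let $X$ be a compact locale with frame presentation $\mathcal{O}X=\langle G\mid R\rangle$ and quotient frame homomorphism $\overline{q}\colon\mathcal{O}(\Sigma^G)\to\mathcal{O}X$. Let $\mathcal{C}$ be the set of those finite sets $S$ of finite subsets of $G$ satisfying $\bigvee_{F\in S}\bigwedge_{g\in F}g=1$ in $\mathcal{O}X$. Then the open $\bigvee_{S\in\mathcal{C}}\bigwedge_{F\in S}{\boxtimes}F$ of the machine space $\Sigma^{\Sigma^G}$ (i.e. the Scott-open subset $\bigcup_{S\in\mathcal{C}}\bigcap_{F\in S}{\boxtimes}F$ of $\mathcal{O}(\Sigma^G)$) consists precisely of the machines $m\in\mathcal{O}(\Sigma^G)$ that cover $X$, i.e. those with $\overline{q}(m)=1$.
   Context: Frames are complete lattices with finite meets distributing over arbitrary joins; a locale $X$ is a frame $\mathcal{O}X$. A locale is compact if every cover $\bigvee_{i\in I}u_i=1$ has a finite subcover. For a set $G$, $\mathcal{O}(\Sigma^G)$ is the free frame on $G$ (elements, called machines, are formal joins of finite formal meets of generators), and the machine space $\Sigma^{\Sigma^G}$ is the locale given by the Scott topology on $\mathcal{O}(\Sigma^G)$. A presentation $\mathcal{O}X=\langle G\mid R\rangle$ means $\mathcal{O}X$ is the quotient of the free frame on $G$ by the congruence generated by $R$, with quotient map $\overline{q}$. For $U\subseteq G$, ${\boxtimes}U=\{m\in\mathcal{O}(\Sigma^G)\mid \exists\text{ finite }J\subseteq U\text{ with }\bigwedge_{g\in J}g\le m\}$, a Scott-open set. *)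

(* Defs.v *)
From HB Require Import structures.
From mathcomp Require Import all_boot.
From mathcomp Require Import boolp classical_sets cardinality.
Set Implicit Arguments. Unset Strict Implicit. Unset Printing Implicit Defensive.
Local Open Scope classical_set_scope.

Record Frame := Build_Frame {
  fcar :> Type;
  fle : fcar -> fcar -> Prop;
  fsup : set fcar -> fcar;
  finf : set fcar -> fcar;
  fle_refl : forall x, fle x x;
  fle_trans : forall x y z, fle x y -> fle y z -> fle x z;
  fle_antisym : forall x y, fle x y -> fle y x -> x = y;
  fsup_ub : forall S x, S x -> fle x (fsup S);
  fsup_least : forall S y, (forall x, S x -> fle x y) -> fle (fsup S) y;
  finf_lb : forall S x, S x -> fle (finf S) x;
  finf_greatest : forall S y, (forall x, S x -> fle y x) -> fle y (finf S);
  fdistr : forall a S,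
    finf [set a; fsup S] = fsup [set finf [set a; s] | s in S]
}.

Arguments fle {f}.
Arguments fsup {f}.
Arguments finf {f}.

Definition fmeet (X : Frame) (a b : X) : X := finf [set a; b].
Definition ftop (X : Frame) : X := finf (@set0 X).

Definition frame_hom (X Y : Frame) (h : X -> Y) : Prop :=
  (forall a b, h (fmeet a b) = fmeet (h a) (h b)) /\
  h (ftop X) = ftop Y /\
  (forall S : set X, h (fsup S) = fsup (h @` S)).

Definition is_free_frame (G : Type) (F0 : Frame) (eta : G -> F0) : Prop :=
  forall (Y : Frame) (f : G -> Y),
    exists h : F0 -> Y,
      (frame_hom h /\ forall g, h (eta g) = f g) /\
      forall h' : F0 -> Y, frame_hom h' -> (forall g, h' (eta g) = f g) ->
        forall x, h' x = h x.

Definition frame_congruence (F0 : Frame) (th : F0 -> F0 -> Prop) : Prop :=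
  (forall a, th a a) /\
  (forall a b, th a b -> th b a) /\
  (forall a b c, th a b -> th b c -> th a c) /\
  (forall a a' b b', th a b -> th a' b' -> th (fmeet a a') (fmeet b b')) /\
  (forall (I : Type) (a b : I -> F0), (forall i, th (a i) (b i)) ->
     th (fsup (range a)) (fsup (range b))).

Definition gen_congruence (F0 : Frame) (R : F0 -> F0 -> Prop) (a b : F0) : Prop :=
  forall th, frame_congruence th -> (forall u v, R u v -> th u v) -> th a b.

Definition compact_frame (X : Frame) : Prop :=
  forall (I : Type) (u : I -> X), fsup (range u) = ftop X ->
    exists J : set I, finite_set J /\ fsup (u @` J) = ftop X.

Definition boxtimes (G : Type) (F0 : Frame) (eta : G -> F0) (U : set G) : set F0 :=
  [set m | exists J : set G, finite_set J /\ J `<=` U /\ fle (finf (eta @` J)) m].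

(* Main.v *)
Require Import Defs.
From mathcomp Require Import all_boot.
From mathcomp Require Import boolp classical_sets cardinality.
Local Open Scope classical_set_scope.

Lemma finite_ind (T : Type) (P : set T -> Prop) :
  P set0 -> (forall x A, finite_set A -> P A -> P (x |` A)) ->
  forall A, finite_set A -> P A.
Proof.
elim/Pchoice: T => T in P *.
move=> P0 PU A /finite_seqP [s ->].
elim: s => [|x s IH]; first by rewrite set_nil.
have -> : [set` (x :: s)] = x |` [set` s].
  by apply/seteqP; split=> y /=; rewrite inE; [move=> /orP [/eqP ->|h]; [left|right] | move=> [->|h]; apply/orP; [left|right]].
by apply: PU => //; apply: finite_seq.
Qed.

Section FL.
Context {F : Frame}.
Implicit Types a b c : F.

Lemma meet_lb1 a b : fle (fmeet a b) a.
Proof. by apply: finf_lb; left. Qed.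
Lemma meet_lb2 a b : fle (fmeet a b) b.
Proof. by apply: finf_lb; right. Qed.
Lemma meet_glb a b c : fle c a -> fle c b -> fle c (fmeet a b).
Proof. by move=> ca cb; apply: finf_greatest => x [->|->]. Qed.
Lemma le_meet a b : fle a b -> fmeet a b = a.
Proof.
move=> ab; apply: fle_antisym; first exact: meet_lb1.
by apply: meet_glb => //; apply: fle_refl.
Qed.
Lemma meetC a b : fmeet a b = fmeet b a.
Proof. by rewrite /fmeet setUC. Qed.
Lemma finf_anti (A B : set F) : A `<=` B -> fle (finf B) (finf A).
Proof. by move=> AB; apply: finf_greatest => x Ax; apply: finf_lb; apply: AB. Qed.
Lemma le_top a : fle a (ftop F).
Proof. by apply: finf_greatest. Qed.
Lemma finf_U1 a (A : set F) : finf (a |` A) = fmeet a (finf A).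
Proof.
apply: fle_antisym.
  apply: meet_glb; first by apply: finf_lb; left.
  by apply: finf_anti => x Ax; right.
apply: finf_greatest => y [->|Ay]; first exact: meet_lb1.
apply: fle_trans (meet_lb2 _ _) _; exact: finf_lb.
Qed.
End FL.

Lemma hom_mono (X Y : Frame) (h : X -> Y) : frame_hom h ->
  forall a b, fle a b -> fle (h a) (h b).
Proof.
move=> [hm _] a b ab; rewrite -(le_meet a b ab) hm; exact: meet_lb2.
Qed.

Lemma hom_finf (X Y : Frame) (h : X -> Y) : frame_hom h ->
  forall A : set X, finite_set A -> h (finf A) = finf (h @` A).
Proof.
move=> hh; apply: finite_ind.
  by rewrite image_set0; case: hh => _ [].
move=> x A _ IH; rewrite finf_U1 image_setU image_set1 finf_U1.
by case: hh => hm _; rewrite hm IH.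
Qed.

Section Sub.
Variables (G : Type) (F0 : Frame) (eta : G -> F0).

Definition Tx (x : F0) : set F0 :=
  [set t | exists J, finite_set J /\ t = finf (eta @` J) /\ fle t x].
Definition Pg (x : F0) : Prop := fle x (fsup (Tx x)).

Lemma Pg_gen J : finite_set J -> Pg (finf (eta @` J)).
Proof. by move=> fJ; apply: fsup_ub; exists J; split=> //; split=> //; apply: fle_refl. Qed.

Lemma Pg_sup (S : set F0) : (forall x, S x -> Pg x) -> Pg (fsup S).
Proof.
move=> HS; apply: fsup_least => x Sx; apply: fle_trans (HS x Sx : fle x _) _.
apply: fsup_least => t [J [fJ [-> tx]]]; apply: fsup_ub; exists J; split=> //; split=> //.
apply: fle_trans tx _; exact: fsup_ub.
Qed.

Lemma Pg_meet a b : Pg a -> Pg b -> Pg (fmeet a b).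
Proof.
move=> Pa Pb.
have h1 : fle (fmeet a b) (fmeet (fsup (Tx a)) (fsup (Tx b))).
  apply: meet_glb; [apply: fle_trans (meet_lb1 _ _) (Pa : fle a _) | apply: fle_trans (meet_lb2 _ _) (Pb : fle b _)].
apply: fle_trans h1 _; rewrite /fmeet fdistr; apply: fsup_least => _ [t Tt <-].
rewrite -/(fmeet _ _) meetC /fmeet fdistr; apply: fsup_least => _ [t' Tt' <-].
rewrite -/(fmeet _ _).
move: Tt Tt' => [J [fJ [-> tb]]] [J' [fJ' [-> t'a]]].
have sub1 : (eta @` J) `<=` (eta @` (J `|` J')) by move=> _ [g Jg <-]; exists g => //; left.
have sub2 : (eta @` J') `<=` (eta @` (J `|` J')) by move=> _ [g Jg <-]; exists g => //; right.
apply: (@fle_trans _ _ (finf (eta @` (J `|` J')))).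
  apply: finf_greatest => _ [g [Jg|Jg] <-].
    apply: fle_trans (meet_lb1 _ _) _; apply: finf_lb; by exists g.
  apply: fle_trans (meet_lb2 _ _) _; apply: finf_lb; by exists g.
apply: fsup_ub; exists (J `|` J'); split; first by rewrite finite_setU.
split=> //; apply: meet_glb.
  apply: fle_trans t'a; exact: finf_anti.
apply: fle_trans tb; exact: finf_anti.
Qed.

Definition sT := {x : F0 | Pg x}.
Definition sle (a b : sT) := fle (sval a) (sval b).
Lemma ssup_P (S : set sT) : Pg (fsup (sval @` S)).
Proof. by apply: Pg_sup => _ [y _ <-]; exact: proj2_sig. Qed.
Definition ssup (S : set sT) : sT := exist _ (fsup (sval @` S)) (ssup_P S).
Definition lbs (S : set sT) : set F0 := [set y | Pg y /\ forall s, S s -> fle y (sval s)].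
Definition sinf (S : set sT) : sT := exist _ (fsup (lbs S)) (@Pg_sup (lbs S) (fun x h => proj1 h)).

Lemma sT_eq (a b : sT) : sval a = sval b -> a = b.
Proof. case: a b => [a pa] [b pb] /= e; subst b; congr exist; exact: Prop_irrelevance. Qed.

Lemma sinf2 (a b : sT) : sval (sinf [set a; b]) = fmeet (sval a) (sval b).
Proof.
apply: fle_antisym => /=.
  apply: fsup_least => y [_ H]; apply: meet_glb; apply: H; [left|right]; done.
apply: fsup_ub; split; first by apply: Pg_meet; [exact: proj2_sig|exact: proj2_sig].
by move=> s [->|->]; [exact: meet_lb1|exact: meet_lb2].
Qed.

Lemma sdistr a S : sinf [set a; ssup S] = ssup [set sinf [set a; s] | s in S].
Proof.
apply: sT_eq; rewrite sinf2 /= /fmeet fdistr; congr fsup.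
apply/seteqP; split=> x.
  move=> [_ [s Ss <-] <-]; exists (sinf [set a; s]); first by exists s.
  by rewrite sinf2.
move=> [_ [s Ss <-] <-]; exists (sval s); first by exists s.
by rewrite sinf2.
Qed.

Definition subF : Frame.
refine (@Build_Frame sT sle ssup sinf _ _ _ _ _ _ _ sdistr).
- by move=> x; apply: fle_refl.
- by move=> x y z; apply: fle_trans.
- by move=> x y h1 h2; apply: sT_eq; apply: fle_antisym.
- by move=> S x Sx; rewrite /sle /=; apply: fsup_ub; exists x.
- by move=> S y H; rewrite /sle /=; apply: fsup_least => _ [x Sx <-]; apply: H.
- by move=> S x Sx; rewrite /sle /=; apply: fsup_least => y [_ H]; apply: H.
- by move=> S y H; rewrite /sle /=; apply: fsup_ub; split; [exact: proj2_sig|].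
Defined.

Lemma sval_hom : frame_hom (fun x : subF => sval x).
Proof.
split; first by move=> a b; exact: sinf2.
split=> //=.
apply: fle_antisym; first by apply: fsup_least => y _; apply: le_top.
apply: fsup_ub; split=> //.
by have := @Pg_gen set0 (finite_set0 G); rewrite image_set0.
Qed.

End Sub.

Lemma hom_comp (X Y Z : Frame) (f : X -> Y) (g : Y -> Z) :
  frame_hom f -> frame_hom g -> frame_hom (fun x => g (f x)).
Proof.
move=> [f1 [f2 f3]] [g1 [g2 g3]]; split; first by move=> a b; rewrite f1 g1.
split; first by rewrite f2 g2.
by move=> S; rewrite f3 g3 image_comp.
Qed.

Lemma hom_id (X : Frame) : frame_hom (fun x : X => x).
Proof. by split=> //; split=> // S; rewrite image_id. Qed.

Lemma normal_form (G : Type) (F0 : Frame) (eta : G -> F0) :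
  is_free_frame eta -> forall x, @Pg G F0 eta x.
Proof.
move=> Hf x.
have Peta g : @Pg G F0 eta (eta g).
  have e : finf [set eta g] = eta g.
    by apply: fle_antisym; [apply: finf_lb | apply: finf_greatest => _ ->; apply: fle_refl].
  by have := @Pg_gen G F0 eta [set g] (finite_set1 g); rewrite image_set1 e.
have [h [[hh heta] _]] := Hf (@subF G F0 eta) (fun g => exist _ (eta g) (Peta g)).
have [k [_ kuniq]] := Hf F0 eta.
have e1 := kuniq _ (hom_id F0) (fun g => erefl) x.
have e2 := kuniq _ (@hom_comp _ _ _ _ _ hh (@sval_hom G F0 eta)) (fun g => f_equal sval (heta g)) x.
have -> : x = sval (h x) by rewrite [LHS]e1 -e2.
exact: proj2_sig.
Qed.

Lemma qfinf (G : Type) (F0 X : Frame) (eta : G -> F0) (q : F0 -> X) :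
  frame_hom q -> forall J, finite_set J ->
  finf ((fun g => q (eta g)) @` J) = q (finf (eta @` J)).
Proof.
move=> Hq J fJ; rewrite (@hom_finf _ _ _ Hq); last exact: finite_image.
by rewrite image_comp.
Qed.

Theorem corollary4p2
  (G : Type) (F0 : Frame) (eta : G -> F0) (Hfree : is_free_frame eta)
  (R : F0 -> F0 -> Prop) (X : Frame) (q : F0 -> X)
  (Hq : frame_hom q) (Hqsurj : forall x : X, exists m, q m = x)
  (Hker : forall a b, q a = q b <-> gen_congruence R a b)
  (Hcpt : compact_frame X) :
  let C : set (set (set G)) :=
    [set S | finite_set S /\ (forall F, S F -> finite_set F) /\
             fsup [set finf ((fun g => q (eta g)) @` F) | F in S] = ftop X] in
  forall m : F0,
    (exists2 S, C S & forall F, S F -> boxtimes eta F m) <-> q m = ftop X.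
Proof.
move=> C m; split.
  move=> [S [fS [fF Htop]] Hbox].
  apply: fle_antisym; first exact: le_top.
  rewrite -Htop; apply: fsup_least => _ [F SF <-].
  have [J [fJ [JF Jm]]] := Hbox F SF.
  apply: fle_trans _ (@hom_mono _ _ _ Hq _ _ Jm).
  rewrite -(@qfinf _ _ _ _ _ Hq _ fJ); apply: finf_anti => _ [g Jg <-]; exists g => //; exact: JF.
move=> qm.
have Pm := @normal_form _ _ _ Hfree m.
pose I := {J : set G | finite_set J /\ fle (finf (eta @` J)) m}.
pose u (j : I) := q (finf (eta @` sval j)).
have Hu : fsup (range u) = ftop X.
  apply: fle_antisym; first exact: le_top.
  rewrite -qm; apply: fle_trans (@hom_mono _ _ _ Hq _ _ (Pm : fle m _)) _.
  case: Hq => _ [_ ->]; apply: fsup_least => _ [t [J [fJ [-> tm]]] <-].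
  apply: fsup_ub; by exists (exist _ J (conj fJ tm)).
have [J0 [fJ0 HJ0]] := Hcpt I u Hu.
exists (sval @` J0).
  split; first exact: finite_image.
  split; first by move=> F [j _ <-]; exact: (proj1 (proj2_sig j)).
  rewrite -HJ0; congr fsup; apply/seteqP; split=> x.
    move=> [F [j J0j <-] <-]; exists j => //; rewrite /u qfinf //; exact: (proj1 (proj2_sig j)).
  move=> [j J0j <-]; exists (sval j); first by exists j.
  rewrite /u qfinf //; exact: (proj1 (proj2_sig j)).
move=> F [j _ <-]; exists (sval j); split; first exact: (proj1 (proj2_sig j)).
by split=> //; exact: (proj2 (proj2_sig j)).
Qed.
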